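(* There is a function $l:\mathbb{N}\to\mathbb{N}$ such that for every $m$ and every graph $G$, every equivalence class of $\cong_m$ on $V(G)$ is a union of connected components of the graph of $\cong^D_{l(m)}$ on $V(G)$.
   Context: Graphs are finite, simple, undirected, loopless, possibly labelled with unary predicates from a finite set. $N(u)$ is the neighbourhood of $u$ and $D(u,v):=N(u)\,\Delta\,N(v)$. $u\cong_m v$ means Duplicator wins the standard $m$-round Ehrenfeucht–Fraïssé game on $(G,u)$ and $(G,v)$ (equivalently, $u,v$ satisfy the same FO formulas of quantifier rank $m$). Differential game from $(\bar a,\bar b)$ on a single graph $G$: in each round, with current tuples $(a_1,\dots,a_n),(b_1,\dots,b_n)$, Spoiler chooses $i\le n$ and $v\in D(a_i,b_i)$ and declares whether $v$ becomes $a_{n+1}$ or $b_{n+1}$ (if all $D(a_i,b_i)$ are empty, Duplicator wins); Duplicator answers with a vertex $w\in D(a_i,b_i)$ (same $i$), which becomes the other of $b_{n+1},a_{n+1}$. After the rounds, Duplicator wins iff $a_i\mapsto b_i$ is a label-preserving isomorphism between the induced subgraphs on the $a$'s and $b$'s (equalities, adjacencies, labels preserved). $u\cong^D_m v$ means Duplicator has a winning strategy in the $m$-round differential game from $((u),(v))$. The graph of this relation has vertex set $V(G)$ and an edge between distinct $u,v$ iff $u\cong^D_m v$. *)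

(* Defs.v *)
From mathcomp Require Import all_boot.
From Stdlib Require Import Relations.
Set Implicit Arguments. Unset Strict Implicit. Unset Printing Implicit Defensive.

Section Games.
(* A labelled graph: vertex set T (finite), adjacency e (symmetric,
   irreflexive -- imposed as hypotheses in the theorem), and a finite set L of
   unary predicates, lab p x meaning that vertex x carries label p. *)
Variables (T : finType) (L : finType) (e : rel T) (lab : L -> pred T).

Definition nbhd (u : T) : {set T} := [set x | e u x].
Definition Dset (u v : T) : {set T} :=
  (nbhd u :\: nbhd v) :|: (nbhd v :\: nbhd u).

Definition piso (a b : seq T) : Prop :=
  size a = size b /\
  forall p q, p \in zip a b -> q \in zip a b ->
    [/\ (p.1 == q.1) = (p.2 == q.2), e p.1 q.1 = e p.2 q.2 &
        forall l : L, lab l p.1 = lab l p.2].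

Fixpoint ef (k : nat) (a b : seq T) : Prop :=
  match k with
  | 0 => piso a b
  | k'.+1 =>
      (forall x, exists y, ef k' (rcons a x) (rcons b y)) /\
      (forall y, exists x, ef k' (rcons a x) (rcons b y))
  end.

Definition ef_equiv (m : nat) (u v : T) : Prop := ef m [:: u] [:: v].

(* The winning condition is checked
   on the final position; the conjunct [piso a b] at each stage is
   equivalent to this (partial isomorphisms are closed under restriction to
   prefixes) and also handles the case where Spoiler has no legal move
   (all D(a_i,b_i) empty), in which the game stops at the current position. *)
Fixpoint dgame (k : nat) (a b : seq T) : Prop :=
  match k with
  | 0 => piso a b
  | k'.+1 =>
      piso a b /\
      forall p, p \in zip a b -> forall v, v \in Dset p.1 p.2 ->
        (exists2 w, w \in Dset p.1 p.2 & dgame k' (rcons a v) (rcons b w)) /\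
        (exists2 w, w \in Dset p.1 p.2 & dgame k' (rcons a w) (rcons b v))
  end.

Definition dgame_equiv (m : nat) (u v : T) : Prop := dgame m [:: u] [:: v].

Definition dgraph_edge (m : nat) (u v : T) : Prop :=
  u <> v /\ (dgame_equiv m u v \/ dgame_equiv m v u).

Definition dgraph_connected (m : nat) (u v : T) : Prop :=
  clos_refl_trans T (dgraph_edge m) u v.

End Games.

(* Main.v *)
From Stdlib Require Import Relations Classical.
Require Import Defs.
From mathcomp Require Import all_boot.
Set Implicit Arguments. Unset Strict Implicit. Unset Printing Implicit Defensive.

Section Proofs.
Variables (T : finType) (L : finType) (e : rel T) (lab : L -> pred T).
Hypothesis esy : symmetric e.

Lemma inD u v x : (x \in Dset e u v) = (e u x != e v x).
Proof. rewrite /Dset /nbhd !inE; by case: (e u x); case: (e v x). Qed.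

Lemma DsetC u v : Dset e u v = Dset e v u.
Proof. by rewrite /Dset setUC. Qed.

Lemma Dset0 u : Dset e u u = set0.
Proof. by apply/setP => x; rewrite inD eqxx inE. Qed.

Lemma piso_size a b : piso e lab a b -> size a = size b.
Proof. by case. Qed.

Lemma piso_sub a b a' b' : size a = size b ->
  {subset zip a b <= zip a' b'} -> piso e lab a' b' -> piso e lab a b.
Proof. move=> hs hsub [_ H]; split=> // p q hp hq; exact: H (hsub _ hp) (hsub _ hq). Qed.

Lemma zip_rcons_sub (a b a' b' : seq T) x y : size a = size b -> size a' = size b' ->
  {subset zip a b <= zip a' b'} ->
  {subset zip (rcons a x) (rcons b y) <= zip (rcons a' x) (rcons b' y)}.
Proof.
move=> h1 h2 hs p; rewrite !zip_rcons // !mem_rcons !inE.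
by case/orP=> [->//|/hs ->]; rewrite orbT.
Qed.

Lemma dgame_piso k a b : dgame e lab k a b -> piso e lab a b.
Proof. by case: k => [|k] //= []. Qed.

Lemma dgame_sub k a b a' b' : size a = size b ->
  {subset zip a b <= zip a' b'} -> dgame e lab k a' b' -> dgame e lab k a b.
Proof.
elim: k a b a' b' => [|k IH] a b a' b' hs hsub /=.
  exact: piso_sub.
case=> hp H; split; first exact: piso_sub hp.
have hs' := piso_size hp.
move=> p /hsub hp' v hv; case: (H p hp' v hv) => [[w hw1 hw2] [w' hw1' hw2']].
split.
  exists w => //; apply: IH hw2; first by rewrite !size_rcons hs.
  exact: zip_rcons_sub.
exists w' => //; apply: IH hw2'; first by rewrite !size_rcons hs.
exact: zip_rcons_sub.
Qed.

Lemma ef_sub k a b a' b' : size a = size b -> size a' = size b' ->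
  {subset zip a b <= zip a' b'} -> ef e lab k a' b' -> ef e lab k a b.
Proof.
elim: k a b a' b' => [|k IH] a b a' b' hs hs' hsub /=.
  exact: piso_sub.
case=> H1 H2; split.
  move=> x; case: (H1 x) => y hy; exists y; apply: IH hy; rewrite ?size_rcons ?hs ?hs' //.
  exact: zip_rcons_sub.
move=> y; case: (H2 y) => x hx; exists x; apply: IH hx; rewrite ?size_rcons ?hs ?hs' //.
exact: zip_rcons_sub.
Qed.

Lemma zip_swap_mem (a b : seq T) x y : ((x,y) \in zip a b) = ((y,x) \in zip b a).
Proof.
elim: a b => [|c a IH] [|d b] //=; rewrite !inE IH; congr (_ || _).
by apply/eqP/eqP => -[-> ->].
Qed.

Lemma piso_swap a b : piso e lab a b -> piso e lab b a.
Proof.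
case=> hs H; split=> // -[p1 p2] [q1 q2]; rewrite -zip_swap_mem => hp; rewrite -zip_swap_mem => hq.
have [h1 h2 h3] := H _ _ hp hq; split=> //= l; exact/esym/h3.
Qed.

Lemma dgame_swap k a b : dgame e lab k a b -> dgame e lab k b a.
Proof.
elim: k a b => [|k IH] a b /=; first exact: piso_swap.
case=> hp H; split; first exact: piso_swap.
move=> [p1 p2]; rewrite -zip_swap_mem => hq v; rewrite /= DsetC => hv.
have [[w hw1 hw2] [w' hw1' hw2']] := H _ hq v hv.
split.
  by exists w'; [|exact: IH].
by exists w; [|exact: IH].
Qed.

Lemma ef_swap k a b : ef e lab k a b -> ef e lab k b a.
Proof.
elim: k a b => [|k IH] a b /=; first exact: piso_swap.
case=> H1 H2; split.
  move=> x; case: (H2 x) => y hy; exists y; exact: IH.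
move=> x; case: (H1 x) => y hy; exists y; exact: IH.
Qed.

Lemma zip_diag (a : seq T) p : p \in zip a a -> p.1 = p.2.
Proof. elim: a => [|c a IH] //=; rewrite inE => /orP[/eqP->//|]; exact: IH. Qed.

Lemma piso_refl a : piso e lab a a.
Proof.
split=> // p q /zip_diag hp /zip_diag hq; by rewrite hp hq.
Qed.

Lemma dgame_le k k' a b : k <= k' -> dgame e lab k' a b -> dgame e lab k a b.
Proof.
elim: k k' a b => [|k IH] [|k'] a b //=.
- by move=> _ [].
- rewrite ltnS => hk [hp H]; split=> // p hp' v hv.
  have [[w hw1 hw2] [w' hw1' hw2']] := H p hp' v hv.
  split; [exists w|exists w'] => //; exact: IH hk _.
Qed.

Lemma zip_mid (a b c : seq T) x z : size a = size b -> size b = size c ->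
  (x,z) \in zip a c -> exists y, (x,y) \in zip a b /\ (y,z) \in zip b c.
Proof.
elim: a b c => [|x0 a IH] [|y0 b] [|z0 c] //= [h1] [h2]; rewrite inE => /orP[/eqP[-> ->]|h].
  by exists y0; rewrite !inE !eqxx.
have [y [hy1 hy2]] := IH _ _ h1 h2 h; by exists y; rewrite !inE hy1 hy2 !orbT.
Qed.

Lemma piso_trans a b c : piso e lab a b -> piso e lab b c -> piso e lab a c.
Proof.
case=> s1 H1 [s2 H2]; split; first by rewrite s1.
move=> [x1 z1] [x2 z2] /(zip_mid s1 s2) [y1 [h11 h12]] /(zip_mid s1 s2) [y2 [h21 h22]].
have [a1 a2 a3] := H1 _ _ h11 h21; have [b1 b2 b3] := H2 _ _ h12 h22.
split=> /=; [by rewrite a1 b1 | by rewrite a2 b2 | by move=> l; rewrite a3 b3].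
Qed.

Lemma ef_refl k a : ef e lab k a a.
Proof.
elim: k a => [|k IH] a /=; first exact: piso_refl.
by split=> x; exists x.
Qed.

Lemma ef_trans k a b c : ef e lab k a b -> ef e lab k b c -> ef e lab k a c.
Proof.
elim: k a b c => [|k IH] a b c /=; first exact: piso_trans.
case=> H1 H2 [G1 G2]; split.
  move=> x; case: (H1 x) => y hy; case: (G1 y) => z hz; exists z; exact: IH hy hz.
move=> z; case: (G2 z) => y hy; case: (H2 y) => x hx; exists x; exact: IH hx hy.
Qed.

Lemma piso_fun a b c d d' : piso e lab a b -> (c,d) \in zip a b -> (c,d') \in zip a b -> d = d'.
Proof. case=> _ H h h'; have [h1 _ _] := H _ _ h h'; apply/eqP; by rewrite -h1 /=. Qed.

Lemma piso_inj a b c c' d : piso e lab a b -> (c,d) \in zip a b -> (c',d) \in zip a b -> c = c'.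
Proof. case=> _ H h h'; have [h1 _ _] := H _ _ h h'; apply/eqP; by rewrite h1 /=. Qed.

Lemma Dpres k a b a0 b0 c d : dgame e lab k.+1 a b -> (a0,b0) \in zip a b -> (c,d) \in zip a b ->
  (c \in Dset e a0 b0) = (d \in Dset e a0 b0).
Proof.
move=> [hp H] h0 hcd; apply/idP/idP => hin.
- have [[w hw1 hw2] _] := H _ h0 c hin.
  have hs := piso_size hp.
  have E : d = w.
    apply: (piso_fun (dgame_piso hw2) (c:=c));
    by rewrite zip_rcons // mem_rcons inE ?hcd ?eqxx ?orbT.
  by rewrite E.
- have [_ [w hw1 hw2]] := H _ h0 d hin.
  have hs := piso_size hp.
  have E : c = w.
    apply: (piso_inj (dgame_piso hw2) (d:=d));
    by rewrite zip_rcons // mem_rcons inE ?hcd ?eqxx ?orbT.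
  by rewrite E.
Qed.

Lemma rev_adj k a b a0 b0 c d : dgame e lab k.+1 a b -> (a0,b0) \in zip a b -> (c,d) \in zip a b ->
  e b0 c = e a0 d.
Proof.
move=> hg h0 hcd; have := Dpres hg h0 hcd; rewrite !inD.
have [_ H] := dgame_piso hg; have [_ h2 _] := H _ _ h0 hcd; move: h2 => /= ->.
by case: (e b0 c); case: (e a0 d); case: (e b0 d).
Qed.

Lemma partner k a b a0 b0 c d : dgame e lab k.+1 a b -> (a0,b0) \in zip a b -> (c,d) \in zip a b ->
  (a0 \in Dset e c d) = (b0 \in Dset e c d).
Proof.
move=> hg h0 hcd; rewrite !inD (rev_adj hg hcd h0).
have [_ H] := dgame_piso hg; have [_ h2 _] := H _ _ hcd h0; move: h2 => /= ->.
by rewrite eq_sym.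
Qed.

Definition UD a b x : bool := has (fun p => x \in Dset e p.1 p.2) (zip a b).

Lemma UD_rcons a b v w x : size a = size b ->
  UD (rcons a v) (rcons b w) x = UD a b x || (x \in Dset e v w).
Proof. by move=> hs; rewrite /UD zip_rcons // has_rcons orbC. Qed.

Lemma UD_in a b p x : p \in zip a b -> x \in Dset e p.1 p.2 -> UD a b x.
Proof. by move=> hp hx; apply/hasP; exists p. Qed.

Lemma zip_mem1 (a b : seq T) c d : (c,d) \in zip a b -> c \in a.
Proof.
elim: a b => [|x a IH] [|y b] //=; rewrite !inE => /orP[/eqP[-> _]|/IH ->];
  by rewrite ?eqxx ?orbT.
Qed.

Lemma zip_mem2 (a b : seq T) c d : (c,d) \in zip a b -> d \in b.
Proof. by rewrite zip_swap_mem => /zip_mem1. Qed.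

Lemma zip_ex1 (a b : seq T) x : size a = size b -> x \in a -> exists y, (x,y) \in zip a b.
Proof.
elim: a b => [|c a IH] [|d b] //= [hs]; rewrite inE => /orP[/eqP->|/(IH _ hs)[y hy]].
  by exists d; rewrite inE eqxx.
by exists y; rewrite inE hy orbT.
Qed.

Lemma zip_ex2 (a b : seq T) x : size a = size b -> x \in b -> exists y, (y,x) \in zip a b.
Proof.
move=> hs /(zip_ex1 (esym hs))[y hy]; exists y; by rewrite zip_swap_mem.
Qed.

Lemma UD_swap a b x : UD b a x = UD a b x.
Proof.
apply/hasP/hasP => -[[p1 p2] hp hx]; exists (p2,p1); rewrite 1?zip_swap_mem //=;
  by rewrite DsetC.
Qed.

Lemma UD_partner k a b c d : dgame e lab k.+1 a b -> (c,d) \in zip a b -> UD a b c = UD a b d.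
Proof. move=> hg hcd; apply: eq_in_has => -[p1 p2] hp; exact: partner hg hcd hp. Qed.

Definition Inv a b := forall c d, (c,d) \in zip a b -> ~~ UD a b c -> ~~ UD a b d ->
  (c \in b) || (d \in a) -> (d,c) \in zip a b.

Lemma Inv_swap a b : Inv a b -> Inv b a.
Proof.
move=> H c d; rewrite -zip_swap_mem !(UD_swap a b) => hcd hc hd hor.
rewrite -zip_swap_mem; apply: H => //; by rewrite orbC.
Qed.

Lemma Inv_single u v : Inv [:: u] [:: v].
Proof.
move=> c d; rewrite /= mem_seq1 => /eqP[-> ->] _ _.
by rewrite !mem_seq1 => /orP[]/eqP->.
Qed.

Lemma Inv_move a b v w : size a = size b -> Inv a b -> UD a b v -> UD a b w ->
  Inv (rcons a v) (rcons b w).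
Proof.
move=> hs H hv hw c d; rewrite !UD_rcons // zip_rcons // !mem_rcons !inE.
case/orP=> [/eqP[-> ->]|hcd]; first by rewrite hv.
rewrite !negb_or => /andP[hc _] /andP[hd _] hor.
have hor' : (c \in b) || (d \in a).
  move: hor => /orP[/orP[/eqP ec|->//]|/orP[/eqP ed|->]]; last by rewrite orbT.
    by move: hc; rewrite ec hw.
  by move: hd; rewrite ed hv.
by rewrite (H _ _ hcd hc hd hor') orbT.
Qed.

Lemma Inv_copy a b x : size a = size b -> x \notin a -> x \notin b -> Inv a b ->
  Inv (rcons a x) (rcons b x).
Proof.
move=> hs hxa hxb H c d; rewrite !UD_rcons // Dset0 !inE !orbF zip_rcons // !mem_rcons !inE.
case/orP=> [/eqP[-> ->] _ _ _|hcd hc hd hor]; first by rewrite eqxx.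
have hor' : (c \in b) || (d \in a).
  move: hor => /orP[/orP[/eqP ec|->//]|/orP[/eqP ed|->]]; last by rewrite orbT.
    by move: hxa; rewrite -ec (zip_mem1 hcd).
  by move: hxb; rewrite -ed (zip_mem2 hcd).
by rewrite (H _ _ hcd hc hd hor') orbT.
Qed.

Lemma Inv_rev a b x c : size a = size b -> piso e lab a b -> (c,x) \in zip a b ->
  Inv a b -> Inv (rcons a x) (rcons b c).
Proof.
move=> hs hp hcx H c' d'.
have E : forall y, UD (rcons a x) (rcons b c) y = UD a b y.
  move=> y; rewrite UD_rcons //; apply/orP/idP => [[->//|hy]|->]; last by left.
  by apply: (UD_in hcx); rewrite /= DsetC.
rewrite !E zip_rcons // !mem_rcons !inE.
case/orP=> [/eqP[-> ->] _ _ _|hcd hc hd hor]; first by rewrite hcx orbT.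
move: hor => /orP[/orP[/eqP ec|hb]|/orP[/eqP ed|ha]].
- have ed : d' = x by apply: (piso_fun hp hcd); rewrite ec.
  by rewrite ec ed eqxx.
- by rewrite (H _ _ hcd hc hd) ?hb ?orbT.
- have ec : c' = c by apply: (piso_inj hp hcd); rewrite ed.
  by rewrite ec ed eqxx.
- by rewrite (H _ _ hcd hc hd) ?ha ?orbT.
Qed.

Lemma piso_rcons a b x y : size a = size b -> piso e lab a b ->
  (forall c d, (c,d) \in zip a b -> (x == c) = (y == d) /\ e x c = e y d) ->
  e x x = e y y -> (forall l, lab l x = lab l y) -> piso e lab (rcons a x) (rcons b y).
Proof.
move=> hs [_ H] Hn hxx hl; split; first by rewrite !size_rcons hs.
move=> [p1 p2] [q1 q2]; rewrite zip_rcons // !mem_rcons !inE.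
case/orP=> [/eqP[-> ->]|hp]; case/orP=> [/eqP[-> ->]|hq] //=.
- by split; rewrite ?eqxx.
- by have [h1 h2] := Hn _ _ hq; split.
- have [h1 h2] := Hn _ _ hp; split; first by rewrite eq_sym h1 eq_sym.
    by rewrite esy h2 esy.
  by have [_ _ h3] := H _ _ hp hp.
- exact: H hp hq.
Qed.

Lemma piso_copy a b x : piso e lab a b -> x \notin a -> x \notin b -> ~~ UD a b x ->
  piso e lab (rcons a x) (rcons b x).
Proof.
move=> hp hxa hxb hux; have hs := piso_size hp.
apply: piso_rcons => // c d hcd; split.
  have -> : (x == c) = false by apply/eqP => ec; move: hxa; rewrite ec (zip_mem1 hcd).
  by have -> : (x == d) = false by apply/eqP => ed; move: hxb; rewrite ed (zip_mem2 hcd).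
have : x \notin Dset e c d by apply: contra hux => h; exact: (UD_in hcd).
by rewrite inD negbK => /eqP; rewrite esy => ->; rewrite esy.
Qed.

Lemma piso_rev k a b x c : dgame e lab k.+1 a b -> (c,x) \in zip a b -> x \notin a -> c \notin b ->
  piso e lab (rcons a x) (rcons b c).
Proof.
move=> hg hcx hxa hcb; have hp := dgame_piso hg; have hs := piso_size hp.
have [_ H] := hp.
apply: piso_rcons => //.
- move=> c' d' hcd; split; last exact: rev_adj hg hcx hcd.
  have -> : (x == c') = false by apply/eqP => ec; move: hxa; rewrite ec (zip_mem1 hcd).
  by have -> : (c == d') = false by apply/eqP => ed; move: hcb; rewrite ed (zip_mem2 hcd).
- by have [_ h _] := H _ _ hcx hcx.
- by move=> l; have [_ _ h] := H _ _ hcx hcx; rewrite h.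
Qed.

Lemma move_a k a b x : dgame e lab k.+1 a b -> UD a b x ->
  exists2 y, UD a b y & dgame e lab k (rcons a x) (rcons b y).
Proof.
move=> [hp H] /hasP[p hpz hx]; have [[w hw1 hw2] _] := H p hpz x hx.
by exists w => //; exact: UD_in hpz hw1.
Qed.

Definition ExtGoal k a b x := exists y a' b',
  [/\ Inv a' b', dgame e lab k a' b' & {subset zip (rcons a x) (rcons b y) <= zip a' b'}].

Lemma ExtGoal_mono k a b a2 b2 x : size a = size b -> size a2 = size b2 ->
  {subset zip a b <= zip a2 b2} -> ExtGoal k a2 b2 x -> ExtGoal k a b x.
Proof.
move=> h1 h2 hsub [y [a' [b' [hi hg hs]]]]; exists y, a', b'; split=> // p hp.
by apply: hs; apply: (zip_rcons_sub h1 h2 hsub).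
Qed.

Lemma key k j a b x s : Inv a b -> dgame e lab (j + k).+1 a b -> x \notin a -> s \notin b ->
  ~~ UD a b x -> ~~ UD a b s -> (s = x \/ (s,x) \in zip a b) ->
  dgame e lab j (rcons a x) (rcons b s) \/ ExtGoal k a b x.
Proof.
elim: j a b => [|j IH] a b hI hg hxa hsb hux hus hsx.
  left => /=; case: hsx => [ex|hsx]; last exact: piso_rev hg hsx hxa hsb.
  by subst s; exact: piso_copy (dgame_piso hg) hxa hsb hux.
have hpx : piso e lab (rcons a x) (rcons b s).
  case: hsx => [ex|hsx]; last exact: piso_rev hg hsx hxa hsb.
  by subst s; exact: piso_copy (dgame_piso hg) hxa hsb hux.
case: (classic (ExtGoal k a b x)) => [|hnot]; first by right.
left; split => //.
have hs := piso_size (dgame_piso hg).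
move: hg; rewrite addSn => hg.
have step : forall v w, UD a b v -> UD a b w ->
    dgame e lab (j + k).+1 (rcons a v) (rcons b w) ->
    dgame e lab j (rcons (rcons a x) v) (rcons (rcons b s) w).
  move=> v w hv hw hg'.
  have hs' : size (rcons a v) = size (rcons b w) by rewrite !size_rcons hs.
  have hI' := Inv_move hs hI hv hw.
  have hsub : {subset zip a b <= zip (rcons a v) (rcons b w)}.
    by move=> p hp; rewrite zip_rcons // mem_rcons inE hp orbT.
  have hxD : x \notin Dset e v w.
    apply/negP => hxD; apply: hnot; apply: (ExtGoal_mono hs hs' hsub).
    have hux' : UD (rcons a v) (rcons b w) x by rewrite UD_rcons // hxD orbT.
    have [y hy hgy] := move_a hg' hux'.
    exists y, (rcons (rcons a v) x), (rcons (rcons b w) y); split.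
    - exact: Inv_move hs' hI' hux' hy.
    - exact: dgame_le (leq_addl _ _) hgy.
    - apply: zip_rcons_sub => //; exact: (piso_size (dgame_piso hg')).
  have hsD : s \notin Dset e v w.
    case: hsx => [->//|hsx].
    have hvw : (v,w) \in zip (rcons a v) (rcons b w) by rewrite zip_rcons // mem_rcons inE eqxx.
    by rewrite (partner hg' (hsub _ hsx) hvw).
  have hne : forall y z, UD a b y -> ~~ UD a b z -> y != z.
    by move=> y z hy hz; apply/eqP => eyz; move: hz; rewrite -eyz hy.
  have := IH (rcons a v) (rcons b w) hI' hg'.
  case.
  - by rewrite mem_rcons inE negb_or eq_sym hne.
  - by rewrite mem_rcons inE negb_or eq_sym hne.
  - by rewrite UD_rcons // negb_or hux.
  - by rewrite UD_rcons // negb_or hus.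
  - case: hsx => [->|hsx]; [by left | right; exact: hsub].
  - move=> hd; apply: dgame_sub hd; first by rewrite !size_rcons hs.
    move=> p; rewrite !zip_rcons ?size_rcons ?hs // !mem_rcons !inE !mem_rcons !inE.
    by case/orP=> [->|/orP[->|->]]; rewrite ?orbT.
  - move=> hE; exfalso; apply: hnot; exact: ExtGoal_mono hs hs' hsub hE.
move=> p; rewrite zip_rcons // mem_rcons inE => hp v hv.
have [p0 hp0 hD] : exists2 p0, p0 \in zip a b & Dset e p0.1 p0.2 = Dset e p.1 p.2.
  case/orP: hp => [/eqP ep|hp]; last by exists p.
  case: hsx => [es|hsx].
    by move: hv; rewrite ep es /= Dset0 inE.
  by exists (s,x) => //; rewrite ep /= DsetC.
have [hp' H] := hg.
have hv' : v \in Dset e p0.1 p0.2 by rewrite hD.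
have [[w hw1 hw2] [w' hw1' hw2']] := H p0 hp0 v hv'.
have hv0 : UD a b v by apply: (UD_in hp0); rewrite hD.
split.
  exists w; first by rewrite -hD.
  apply: step hw2 => //; exact: UD_in hp0 hw1.
exists w'; first by rewrite -hD.
apply: step hw2' => //; exact: UD_in hp0 hw1'.
Qed.

Lemma ext k a b x : Inv a b -> dgame e lab (k + k).+1 a b -> ExtGoal k a b x.
Proof.
move=> hI hg; have hs := piso_size (dgame_piso hg).
have hsubr : forall y, (x,y) \in zip a b -> {subset zip (rcons a x) (rcons b y) <= zip a b}.
  by move=> y hy p; rewrite zip_rcons // mem_rcons inE => /orP[/eqP->|].
case hxa: (x \in a).
  have [y hy] := zip_ex1 hs hxa.
  exists y, a, b; split=> //; last exact: hsubr.
  exact: dgame_le (leqW (leq_addl _ _)) hg.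
case hux: (UD a b x).
  have [y hy hgy] := move_a hg hux.
  exists y, (rcons a x), (rcons b y); split=> //.
  - exact: Inv_move hs hI hux hy.
  - exact: dgame_le (leq_addl _ _) hgy.
have hxa' : x \notin a by rewrite hxa.
have hux' : ~~ UD a b x by rewrite hux.
case hxb: (x \in b).
  have [c hc] := zip_ex2 hs hxb.
  have huc : ~~ UD a b c by rewrite (UD_partner hg hc).
  have hcb : c \notin b.
    apply/negP => hcb; move: hxa'; rewrite (zip_mem1 (hI _ _ hc huc hux' _)) //.
    by rewrite hcb.
  case: (key hI hg hxa' hcb hux' huc (or_intror hc)) => // hd.
  exists c, (rcons a x), (rcons b c); split=> //.
  exact: Inv_rev hs (dgame_piso hg) hc hI.
have hxb' : x \notin b by rewrite hxb.
case: (key hI hg hxa' hxb' hux' hux' (or_introl erefl)) => // hd.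
exists x, (rcons a x), (rcons b x); split=> //.
exact: Inv_copy.
Qed.

Fixpoint Lf (m : nat) : nat := if m is m'.+1 then (Lf m' + Lf m').+1 else 0.

Lemma main_claim m : forall a b, Inv a b -> dgame e lab (Lf m) a b -> ef e lab m a b.
Proof.
elim: m => [|m IH] a b hI hg /=; first exact: hg.
have hs := piso_size (dgame_piso hg).
split.
  move=> x; have [y [a' [b' [hI' hg' hsub]]]] := ext x hI hg.
  exists y; apply: ef_sub (IH _ _ hI' hg') => //.
    by rewrite !size_rcons hs.
  exact: piso_size (dgame_piso hg').
move=> y; have [x [b' [a' [hI' hg' hsub]]]] := ext y (Inv_swap hI) (dgame_swap hg).
exists x; apply: ef_sub (IH _ _ (Inv_swap hI') (dgame_swap hg')) => //.
  by rewrite !size_rcons hs.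
  exact: esym (piso_size (dgame_piso hg')).
move=> [p1 p2]; rewrite zip_swap_mem => /hsub; by rewrite -zip_swap_mem.
Qed.
End Proofs.

Theorem lemma6p1 :
  exists l : nat -> nat,
    forall (m : nat) (T : finType) (L : finType) (e : rel T)
           (lab : L -> pred T),
      symmetric e -> irreflexive e ->
      forall u v : T,
        dgraph_connected e lab (l m) u v -> ef_equiv e lab m u v.
Proof.
exists Lf => m T L e lab hsym _ u v.
elim=> [x y [_ [h|h]]|x|x y z _ h1 _ h2].
- exact: (main_claim hsym (@Inv_single _ e x y) h).
- apply: ef_swap; exact: (main_claim hsym (@Inv_single _ e y x) h).
- exact: ef_refl.
- exact: ef_trans h1 h2.
Qed.
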